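(* Let $f$ be a piecewise contracting interval map satisfying the separation property, let $x\in\widetilde X$ and let $\theta$ be its itinerary. Then there exist $m_0\geqslant 1$ and a number $\beta(x)$ such that \[ p(\theta,n)=n\,\#\Delta_{lr}(x)+\beta(x)\qquad\forall\, n\geqslant m_0, \] and \[ p(\theta,1)-\#\Delta_{lr}(x)\leqslant\beta(x)\leqslant p(\theta,1)-\#\Delta+m_0\big(\#\Delta-\#\Delta_{lr}(x)\big). \]
   Context: Let $X$ be a compact interval of $\mathbb{R}$ and $X_1<X_2<\dots<X_N$ ($N\geqslant 2$) be non-empty pairwise disjoint intervals, open in $X$, with $X=\bigcup_{i}\overline{X_i}$. Let $\Delta:=\{x\in\overline{X_i}\cap\overline{X_j}: i\neq j\}$; so $\Delta=\{c_1,\dots,c_{N-1}\}$ with $\{c_i\}=\overline{X_i}\cap\overline{X_{i+1}}$. A piecewise contracting interval map is a map $f:X\to X$ discontinuous at every point of $\Delta$ for which there is $\lambda\in(0,1)$ with $|f(x)-f(y)|\leqslant\lambda|x-y|$ whenever $x,y$ lie in the same $X_i$; let $f_i:\overline{X_i}\to X$ be the continuous extension of $f|_{X_i}$. Separation property: each $f_i$ is injective and $f_i(\overline{X_i})\cap f_j(\overline{X_j})=\emptyset$ for $i\neq j$. $\widetilde X:=\bigcap_{n\geqslant 0}f^{-n}(X\setminus\Delta)$ (assumed non-empty); the itinerary of $x\in\widetilde X$ is $\theta\in\{1,\dots,N\}^{\mathbb{N}}$ with $\theta_t=i$ iff $f^t(x)\in X_i$. $L_n(\theta):=\{\theta_t\dots\theta_{t+n-1}:t\geqslant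 0\}$, $p(\theta,n):=\#L_n(\theta)$. Atoms: for $A\subset X$ let $F_i(A):=\overline{f(A\cap X_i)}$; for $(i_1,\dots,i_n)\in\{1,\dots,N\}^n$ the set $A_{i_1\dots i_n}:=F_{i_n}\circ\dots\circ F_{i_1}(X)$ is an atom of generation $n$ if it is non-empty; $\mathcal{A}_n$ is the set of atoms of generation $n$, and for $x\in X$, $\mathcal{A}_n(x):=\{A\in\mathcal{A}_n:\exists t\in\mathbb{N},\ f^{t+n}(x)\in A\}$. For $c=c_i\in\Delta$ and $n\geqslant 1$, $c$ is $n$-left-right visited by the orbit of $x$ if there exists $A\in\mathcal{A}_n(x)$ with $c\in A$, such that $f^{t+n}(x)\in A\cap X_i$ for some $t\in\mathbb{N}$ and $f^{t'+n}(x)\in A\cap X_{i+1}$ for some $t'\in\mathbb{N}$. $\Delta^n_{lr}(x)$ is the set of such discontinuities, and $\Delta_{lr}(x):=\bigcap_{n\geqslant1}\Delta^n_{lr}(x)$ (the discontinuities that are left-right recurrently visited). *)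

(* Defs.v *)
From HB Require Import structures.
From mathcomp Require Import all_boot all_order all_algebra.
From mathcomp Require Import all_classical all_reals all_analysis.



Unset Printing Implicit Defensive.

Import Order.TTheory GRing.Theory Num.Theory.
Import numFieldNormedType.Exports.
Local Open Scope classical_set_scope.
Local Open Scope ring_scope.

(* Pieces are indexed by i : 'I_N (0-indexed; paper's X_{i+1} is our piece i):
   piece 0 = [c 0, c 1), piece i = (c i, c (i+1)) for 0 < i < N-1,
   piece (N-1) = (c (N-1), c N].
   Discontinuity set Delta = {c k | 0 < k < N}; c k lies between
   piece (k-1) and piece k. *)

Definition Xspace {R : realType} (c : nat -> R) (N : nat) : set R :=
  `[c 0%N, c N].

Definition piece {R : realType} (c : nat -> R) (N : nat) (i : nat) : set R :=
  [set y | (if i == 0%N then c 0%N <= y else c i < y) /\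
           (if i.+1 == N then y <= c N else y < c i.+1)].

Definition in_Delta {R : realType} (c : nat -> R) (N : nat) (y : R) : Prop :=
  exists k : nat, [/\ (0 < k)%N, (k < N)%N & y = c k].

Definition piecewise_contracting {R : realType} (c : nat -> R) (N : nat)
    (f : R -> R) : Prop :=
  [/\ (forall y, Xspace c N y -> Xspace c N (f y)),
      (forall k : nat, (0 < k)%N -> (k < N)%N ->
         ~ continuous_at (c k) f) &
      (exists lambda : R, [/\ 0 < lambda, lambda < 1 &
         forall (i : 'I_N) (y z : R), piece c N i y -> piece c N i z ->
           `|f y - f z| <= lambda * `|y - z|])].

(* f_i : the continuous extension of f restricted to piece i, to its
   closure [c i, c (i+1)] (unique since the piece is dense in its closure). *)
Definition is_cont_ext {R : realType} (c : nat -> R) (N : nat)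
    (f : R -> R) (i : 'I_N) (g : R -> R) : Prop :=
  {within `[c i, c i.+1], continuous g} /\
  (forall y, piece c N i y -> g y = f y).

Definition separation {R : realType} (c : nat -> R) (N : nat)
    (f : R -> R) : Prop :=
  exists fi : 'I_N -> R -> R,
    [/\ (forall i, is_cont_ext c N f i (fi i)),
        (forall (i : 'I_N) (y z : R), `[c i, c i.+1]%classic y -> `[c i, c i.+1]%classic z ->
            fi i y = fi i z -> y = z) &
        (forall i j : 'I_N, i != j ->
            (fi i @` `[c i, c i.+1]) `&` (fi j @` `[c j, c j.+1]) = set0)].

Definition in_Xtilde {R : realType} (c : nat -> R) (N : nat)
    (f : R -> R) (x : R) : Prop :=
  forall n : nat, Xspace c N (iter n f x) /\ ~ in_Delta c N (iter n f x).

Definition is_itinerary {R : realType} (c : nat -> R) (N : nat)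
    (f : R -> R) (x : R) (theta : nat -> 'I_N) : Prop :=
  forall t : nat, piece c N (theta t) (iter t f x).

Definition complexity (N : nat) (theta : nat -> 'I_N) (n : nat) : nat :=
  #|[set w : n.-tuple 'I_N |
      `[< exists t : nat, forall j : 'I_n, theta (t + j)%N = tnth w j >]]|.

Definition Fop {R : realType} (c : nat -> R) (N : nat) (f : R -> R)
    (i : nat) (A : set R) : set R :=
  closure (f @` (A `&` piece c N i)).

Definition atom {R : realType} (c : nat -> R) (N : nat) (f : R -> R)
    (w : seq 'I_N) : set R :=
  foldl (fun A (i : 'I_N) => Fop c N f i A) (Xspace c N) w.

Definition is_atom {R : realType} (c : nat -> R) (N : nat) (f : R -> R)
    (n : nat) (A : set R) : Prop :=
  exists w : n.-tuple 'I_N, atom c N f w = A /\ A !=set0.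

Definition atom_of_orbit {R : realType} (c : nat -> R) (N : nat) (f : R -> R)
    (x : R) (n : nat) (A : set R) : Prop :=
  is_atom c N f n A /\ exists t : nat, A (iter (t + n) f x).

Definition lr_visited {R : realType} (c : nat -> R) (N : nat) (f : R -> R)
    (x : R) (n k : nat) : Prop :=
  exists A : set R, [/\ atom_of_orbit c N f x n A, A (c k),
    (exists t : nat, A (iter (t + n) f x) /\ piece c N k.-1 (iter (t + n) f x)) &
    (exists t' : nat, A (iter (t' + n) f x) /\ piece c N k (iter (t' + n) f x))].

Definition card_Delta_lr {R : realType} (c : nat -> R) (N : nat) (f : R -> R)
    (x : R) : nat :=
  #|[set k : 'I_N | (0 < k)%N &&
      `[< forall n : nat, (0 < n)%N -> lr_visited c N f x n k >]]|.

(* Main.v *)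
Require Import Defs.
From HB Require Import structures.
From mathcomp Require Import all_boot all_order all_algebra.
From mathcomp Require Import all_classical all_reals all_analysis.
From mathcomp Require Import lra zify.
Import Order.TTheory GRing.Theory Num.Theory.
Import numFieldNormedType.Exports.
Local Open Scope ring_scope.


Lemma card_pred_le (N : nat) (S B : {set 'I_N}) :
  (forall j k : 'I_N, j \in S -> k \in S -> (j < k)%N -> k \in B) ->
  (#|S|.-1 <= #|B|)%N.
Proof.
move=> H; case: (set_0Vmem S) => [->|[i0 i0S]]; first by rewrite cards0.
case: (arg_minnP (fun k : 'I_N => val k) i0S) => a aS amin.
have {}aS : a \in S := aS.
have {}amin : forall j, j \in S -> (a <= j)%N := amin.
rewrite (cardsD1 a S) aS /= add0n.
apply: subset_leq_card; apply/fintype.subsetP => k; rewrite !inE => /andP [ka kS].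
apply: (H a k aS kS); rewrite ltn_neqAle amin // andbT.
by rewrite eq_sym.
Qed.

Lemma card_pred_le2 (N : nat) (S Q : {set 'I_N}) :
  (forall k, k \in Q -> k \in S /\ exists2 j, j \in S & (j < k)%N) ->
  (#|Q| <= #|S|.-1)%N.
Proof.
move=> H; case: (set_0Vmem S) => [S0|[i0 i0S]].
  rewrite S0 cards0 leqn0 cards_eq0; apply/eqP/setP => k; rewrite inE.
  apply/negP => /H [+ _]; by rewrite S0 inE.
case: (arg_minnP (fun k : 'I_N => val k) i0S) => a aS amin.
have {}aS : a \in S := aS.
have {}amin : forall j, j \in S -> (a <= j)%N := amin.
rewrite (cardsD1 a S) aS /= add0n.
apply: subset_leq_card; apply/fintype.subsetP => k /H [kS [j jS jk]]; rewrite !inE kS andbT.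
apply/negP => /eqP ka; subst k.
by have := amin j jS; rewrite leqNgt jk.
Qed.

Lemma sum_disj (N : nat) (T : finType) (K : T -> {set 'I_N}) (B : {set 'I_N}) :
  (forall u k, k \in K u -> k \in B) ->
  (forall u v k, k \in K u -> k \in K v -> u = v) ->
  (\sum_u #|K u| <= #|B|)%N.
Proof.
move=> H1 H2.
have -> : \sum_u #|K u| = \sum_u \sum_(k in B) (k \in K u : nat).
  apply: eq_bigr => u _.
  rewrite -sum1_card [LHS]big_mkcond [RHS]big_mkcond; apply: eq_bigr => k _.
  case kK: (k \in K u); first by rewrite (H1 _ _ kK).
  by case: (k \in B).
rewrite exchange_big /= -sum1_card; apply: leq_sum => k _.
have -> : \sum_u (k \in K u : nat) = #|[pred u | k \in K u]|.
  rewrite -sum1_card [RHS]big_mkcond; apply: eq_bigr => u _ /=.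
  by rewrite inE; case: (k \in K u).
apply/card_le1_eqP => u v; rewrite !inE => ku kv.
exact: (H2 _ _ _ kv ku).
Qed.

Lemma card_pos_lt (N : nat) (B : {set 'I_N}) : (0 < N)%N ->
  (forall k : 'I_N, k \in B -> (0 < k)%N) -> (#|B| <= N.-1)%N.
Proof.
move=> N0 H; pose o0 := Ordinal N0.
have : B \subset [set: 'I_N] :\ o0.
  apply/fintype.subsetP => k kB; rewrite !inE andbT; apply/negP => /eqP ko.
  by have := H k kB; rewrite ko.
move/subset_leq_card => le.
have h1 := cardsD1 o0 [set: 'I_N]; rewrite finset.in_setT in h1.
have h2 : #|[set: 'I_N]| = N by rewrite cardsT card_ord.
rewrite /nat_of_bool in h1. move: (#|[set: 'I_N] :\ o0|) (#|[set: 'I_N]|) (#|B|) h1 h2 le => m s b h1 h2 le. lia.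
Qed.


Definition wseq {N : nat} (theta : nat -> 'I_N) n t : seq 'I_N :=
  mkseq (fun j => theta (t + j)%N) n.

Definition word {N : nat} (theta : nat -> 'I_N) n t : n.-tuple 'I_N :=
  @Tuple n _ (wseq theta n t) (introT eqP (size_mkseq _ _)).

Definition Sset {N : nat} (theta : nat -> 'I_N) n (u : seq 'I_N) : {set 'I_N} :=
  [set i | `[< exists t, wseq theta n t = u /\ theta (t + n)%N = i >]].

Definition Lang {N : nat} (theta : nat -> 'I_N) n :=
  [set w : n.-tuple 'I_N |
      `[< exists t : nat, forall j : 'I_n, theta (t + j)%N = tnth w j >]].

Lemma inL (N : nat) (theta : nat -> 'I_N) n (w : n.-tuple 'I_N) :
  (exists t, forall j : 'I_n, theta (t + j)%N = tnth w j) <->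
  exists t, wseq theta n t = w.
Proof.
split => [[t H]|[t H]]; exists t.
  apply: (@eq_from_nth _ (theta 0%N)); first by rewrite size_mkseq size_tuple.
  move=> j; rewrite size_mkseq => jn; rewrite nth_mkseq //.
  by rewrite (H (Ordinal jn)) (tnth_nth (theta 0%N)).
by move=> j; rewrite (tnth_nth (theta 0%N)) -H nth_mkseq.
Qed.

Lemma complexity_succ (N : nat) (theta : nat -> 'I_N) n :
  complexity N theta n.+1 =
  (complexity N theta n + \sum_(u : n.-tuple 'I_N) (#|Sset theta n u|).-1)%N.
Proof.
have eL : forall m, complexity N theta m = #|Lang theta m|.
  move=> m; rewrite /complexity /Lang; apply: eq_card => w. rewrite inE. apply/idP/idP => [/set_mem /= /asboolP H|H]; [exact/asboolP|exact: mem_set].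
rewrite !eL.
pose h (p : n.-tuple 'I_N * 'I_N) := [tuple of rcons p.1 p.2].
have hinj : injective h.
  move=> [u i] [v j] /(congr1 val) /= /rcons_inj [/val_inj -> ->] //.
have -> : Lang theta n.+1 = h @: [set p : n.-tuple 'I_N * 'I_N | p.2 \in Sset theta n p.1].
  apply/setP => w; rewrite inE; apply/asboolP/imsetP.
    move=> /inL [t H]; exists (word theta n t, theta (t + n)%N).
      by rewrite inE /=; rewrite inE; apply/asboolP; exists t.
    by apply/val_inj; rewrite /= -H /wseq mkseqS.
  move=> [[u i]]; rewrite inE /= inE => /asboolP [t [wt ti]] ->.
  apply/inL; exists t; by rewrite /= /wseq mkseqS -/(wseq theta n t) wt ti.
rewrite (card_imset _ hinj).
have -> : #|[set p : n.-tuple 'I_N * 'I_N | p.2 \in Sset theta n p.1]| = (\sum_(u : n.-tuple 'I_N) #|Sset theta n u|)%N.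
  rewrite -sum1_card.
  transitivity (\sum_(u : n.-tuple 'I_N) \sum_(i in Sset theta n u) 1)%N; last first.
    by apply: eq_bigr => u _; rewrite sum1_card.
  rewrite pair_big_dep /=; apply: eq_bigl => p; by rewrite inE.
have -> : #|Lang theta n| = (\sum_(u : n.-tuple 'I_N) (u \in Lang theta n : nat))%N.
  rewrite -sum1_card big_mkcond /=; apply: eq_bigr => u _; by case: (u \in Lang theta n).
rewrite -big_split /=; apply: eq_bigr => u _.
case uL: (u \in Lang theta n).
  move: uL; rewrite inE => /asboolP /inL [t wt].
  rewrite add1n prednK //; apply/card_gt0P; exists (theta (t + n)%N).
  by rewrite inE; apply/asboolP; exists t.
suff -> : #|Sset theta n u| = 0%N by [].
apply/eqP; rewrite cards_eq0; apply/eqP/setP => i; rewrite !inE.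
apply/negP => /asboolP [t [wt _]]; move/negbT: uL => /negP; apply.
by rewrite inE; apply/asboolP/inL; exists t.
Qed.

Definition K1 {R : realType} (c : nat -> R) N f (u : seq 'I_N) : {set 'I_N} :=
  [set k : 'I_N | (0 < k)%N && `[< atom c N f u (c k) >]].
Definition Dset {R : realType} (c : nat -> R) N f x n : {set 'I_N} :=
  [set k : 'I_N | (0 < k)%N && `[< lr_visited c N f x n k >]].
Definition K2 {R : realType} (c : nat -> R) N f x n (u : seq 'I_N) : {set 'I_N} :=
  [set k : 'I_N | (k \in Dset c N f x n) && `[< atom c N f u (c k) >]].
Definition Tset {N : nat} (theta : nat -> 'I_N) n (u : seq 'I_N) : {set 'I_N} :=
  [set k : 'I_N | (k \in Sset theta n u) &&
     [exists j : 'I_N, (j \in Sset theta n u) && (j.+1 == k)%N]].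
Definition dd {N : nat} (theta : nat -> 'I_N) n :=
  (\sum_(u : n.-tuple 'I_N) (#|Sset theta n u|).-1)%N.

Lemma stabilize (T : finType) (D : nat -> {set T}) :
  (forall n, D n.+1 \subset D n) ->
  exists n2, (0 < n2)%N /\ forall n, (n2 <= n)%N -> D n = D n2.
Proof.
move=> H.
have mono : forall m n, (m <= n)%N -> D n \subset D m.
  move=> m n /subnK <-; elim: (n - m)%N => [|k IH]; first by rewrite add0n.
  rewrite addSn; exact: fintype.subset_trans (H _) IH.
suff: forall b n, (0 < n)%N -> (#|D n| <= b)%N ->
    exists n2, (0 < n2)%N /\ forall n, (n2 <= n)%N -> D n = D n2.
  by move=> /(_ #|D 1%N| 1%N erefl (leqnn _)).
elim=> [|b IH] n n0 hb.
  exists n; split => // m nm; apply/eqP; rewrite eqEcard mono //=.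
  by move: hb; rewrite leqn0 => /eqP ->.
case: (pselect (forall m, (n <= m)%N -> D m = D n)) => [Hm|].
  by exists n; split.
move=> /existsNP [m /not_implyP [nm neq]].
have lt : (#|D m| < #|D n|)%N.
  apply: proper_card; rewrite finset.properEneq mono // andbT.
  by apply/eqP.
apply: (IH m (leq_trans n0 nm)); rewrite -ltnS; exact: leq_trans lt hb.
Qed.

Local Open Scope classical_set_scope.


Lemma closure_eps {R : realType} {S : set R} {y e} : closure S y -> 0 < e -> exists s, S s /\ `|y - s| < e.
Proof.
move=> cl e0.
have : nbhs y (ball y e) by exact: nbhsx_ballx.
by move=> /cl [s [Ss Bs]]; exists s; split.
Qed.

Section Geo.
Variables (R : realType) (N : nat) (c : nat -> R) (f : R -> R).
Hypothesis hN : (2 <= N)%N.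
Hypothesis hc : forall k : nat, (k < N)%N -> c k < c k.+1.
Variable lam : R.
Hypothesis lam0 : 0 < lam.
Hypothesis lam1 : lam < 1.
Hypothesis hcontr : forall (i : 'I_N) (y z : R), piece c N i y -> piece c N i z ->
           `|f y - f z| <= lam * `|y - z|.
Hypothesis hXmap : forall y, Xspace c N y -> Xspace c N (f y).
Variable fi : 'I_N -> R -> R.
Hypothesis hfi_ext : forall i, is_cont_ext c N f i (fi i).
Hypothesis hfi_inj : forall (i : 'I_N) (y z : R), `[c i, c i.+1]%classic y -> `[c i, c i.+1]%classic z ->
            fi i y = fi i z -> y = z.
Hypothesis hfi_disj : forall i j : 'I_N, i != j ->
            (fi i @` `[c i, c i.+1]) `&` (fi j @` `[c j, c j.+1]) = set0.

Lemma c_le {i j} : (i <= j)%N -> (j <= N)%N -> c i <= c j.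
Proof.
move=> ij jN; elim: j ij jN => [|j IH]; first by rewrite leqn0 => /eqP ->.
rewrite leq_eqVlt => /orP [/eqP -> //| ij] jN.
apply: le_trans (IH ij (ltnW jN)) _; exact/ltW/hc.
Qed.

Lemma c_lt {i j} : (i < j)%N -> (j <= N)%N -> c i < c j.
Proof. move=> ij jN; exact: (lt_le_trans (hc _ (leq_trans ij jN)) (c_le ij jN)). Qed.

Lemma piece_itv {i : nat} {y} : (i < N)%N -> piece c N i y -> c i <= y <= c i.+1.
Proof.
move=> iN [h1 h2]; apply/andP; split.
  by move: h1; case: ifP => [/eqP -> //|_ /ltW].
by move: h2; case: ifP => [/eqP -> //|_ /ltW].
Qed.

Lemma piece_right {i : nat} {y} : (i.+1 < N)%N -> piece c N i y -> y < c i.+1.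
Proof. by move=> iN [_]; rewrite ifF //; apply/negbTE; rewrite neq_ltn iN. Qed.

Lemma piece_left {i : nat} {y} : (0 < i)%N -> piece c N i y -> c i < y.
Proof. by move=> i0 [+ _]; rewrite ifF //; apply/negbTE; rewrite -lt0n. Qed.

Lemma piece_uniq (i j : 'I_N) y : piece c N i y -> piece c N j y -> i = j.
Proof.
wlog: i j / (i <= j)%N => [H pi pj|ij pi pj].
  by case/orP: (leq_total i j) => h; [|apply/esym]; apply: H.
apply/val_inj/eqP; rewrite eqn_leq ij /=; rewrite leqNgt; apply/negP => lt.
have := piece_right (leq_ltn_trans lt (ltn_ord j)) pi.
have := piece_left (leq_ltn_trans (leq0n _) lt) pj.
move=> h1 h2; have := lt_trans h1 h2.
by rewrite ltNge (c_le lt (ltnW (ltn_ord j))).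
Qed.


Definition convexS (S : set R) := forall y z v, S y -> S z -> y <= v <= z -> S v.

Lemma X_closed : closed (Xspace c N).
Proof. exact: interval_closed. Qed.

Lemma Fop_mono i A B : A `<=` B -> Fop c N f i A `<=` Fop c N f i B.
Proof.
move=> AB; apply: closure_subset => _ [y [Ay Py] <-]; exists y => //; split=> //.
exact: AB.
Qed.

Lemma Fop_X i : Fop c N f i (Xspace c N) `<=` Xspace c N.
Proof.
rewrite [X in _ `<=` X]((closure_id _).1 X_closed).
by apply: closure_subset => _ [y [Xy _] <-]; exact: hXmap.
Qed.

Lemma atom_rcons w i : atom c N f (rcons w i) = Fop c N f i (atom c N f w).
Proof. by rewrite /atom foldl_rcons. Qed.

Lemma atom_closed w : closed (atom c N f w).
Proof.
elim/last_ind: w => [|w i _]; first exact: X_closed.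
rewrite atom_rcons; exact: closed_closure.
Qed.

Lemma foldl_mono (w : seq 'I_N) : forall A B, A `<=` B ->
  foldl (fun A (i : 'I_N) => Fop c N f i A) A w `<=`
  foldl (fun A (i : 'I_N) => Fop c N f i A) B w.
Proof. elim: w => //= i w IH A B AB; apply: IH; exact: Fop_mono. Qed.

Lemma atom_cons i w : atom c N f (i :: w) `<=` atom c N f w.
Proof. rewrite /atom /=; apply: foldl_mono; exact: Fop_X. Qed.

Lemma piece_I (i : 'I_N) y : piece c N i y -> `[c i, c i.+1]%classic y.
Proof. move=> P; rewrite /= in_itv /=; exact: piece_itv (ltn_ord i) P. Qed.

Lemma Fop_sub_fi {i : 'I_N} {A} : closed A ->
  Fop c N f i A `<=` fi i @` (A `&` `[c i, c i.+1]).
Proof.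
move=> cA.
have cpt : compact (fi i @` (A `&` `[c i, c i.+1])).
  apply: continuous_compact.
    apply: continuous_subspaceW (hfi_ext i).1; exact: subIsetr.
  rewrite setIC; apply: compact_closedI => //; exact: segment_compact.
rewrite [X in _ `<=` X]((closure_id _).1 (compact_closed (@Rhausdorff R) cpt)).
apply: closure_subset => _ [y [Ay Py] <-]; exists y; last exact: (hfi_ext i).2.
by split=> //; apply: piece_I.
Qed.

Lemma atom_disj (u v : seq 'I_N) : size u = size v -> u <> v ->
  forall y, atom c N f u y -> atom c N f v y -> False.
Proof.
elim/last_ind: u v => [|u i IH] v; elim/last_ind: v => [|v j _] //; rewrite ?size_rcons //.
move=> /eqP; rewrite eqSS => /eqP szuv neq y; rewrite !atom_rcons.
move=> /(Fop_sub_fi (atom_closed _)) [a [Aa Ia] <-].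
move=> /(Fop_sub_fi (atom_closed _)) [b [Ab Ib] eq].
case: (eqVneq i j) => [eij|nij].
  subst j; have ab := @hfi_inj i b a Ib Ia eq; subst b.
  by apply: (IH v szuv _ a Aa Ab) => euv; apply: neq; rewrite euv.
have := hfi_disj _ _ nij; rewrite -subset0 => /(_ (fi i a)); apply; split.
  by exists a.
by exists b.
Qed.

Lemma conv_closure (S : set R) : convexS S -> convexS (closure S).
Proof.
move=> cS y z v cy cz /andP [yv vz].
case: (eqVneq v y) => [-> //|nvy]; case: (eqVneq v z) => [-> //|nvz].
have yv' : y < v by rewrite lt_neqAle eq_sym nvy yv.
have vz' : v < z by rewrite lt_neqAle nvz vz.
have h1 : 0 < v - y by rewrite subr_gt0.
have h2 : 0 < z - v by rewrite subr_gt0.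
have [s [Ss hs]] := closure_eps cy h1.
have [s' [Ss' hs']] := closure_eps cz h2.
apply: subset_closure; apply: (cS s s') => //.
move: hs hs'; rewrite !ltr_norml => /andP [h3 h4] /andP [h5 h6].
apply/andP; split; lra.
Qed.

Lemma piece_conv {i : nat} : convexS (piece c N i).
Proof.
move=> y z v [y1 y2] [z1 z2] /andP [yv vz]; split.
  by move: y1; case: ifP => _ h; [exact: le_trans yv|exact: lt_le_trans yv].
by move: z2; case: ifP => _ h; [exact: le_trans h|exact: le_lt_trans h].
Qed.

Lemma conv_img (i : 'I_N) A : convexS A -> convexS (f @` (A `&` piece c N i)).
Proof.
move=> cA.
have key : forall a b v, A a -> piece c N i a -> A b -> piece c N i b -> a <= b ->
    Num.min (f a) (f b) <= v <= Num.max (f a) (f b) ->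
    (f @` (A `&` piece c N i)) v.
  move=> a b v Aa Pa Ab Pb ab hv.
  have sub : `[a, b]%classic `<=` A `&` piece c N i.
    move=> t; rewrite /= in_itv /= => ht; split.
      exact: (cA a b t Aa Ab ht).
    exact: (piece_conv a b t Pa Pb ht).
  have subI : `[a, b]%classic `<=` `[c i, c i.+1]%classic.
    by move=> t /sub [_ /piece_I].
  have cont : {within `[a, b], continuous fi i}.
    exact: continuous_subspaceW subI (hfi_ext i).1.
  rewrite -(hfi_ext i).2 // -[f b](hfi_ext i).2 // in hv.
  have [t tab ft] := IVT ab cont hv.
  exists t; first exact: sub.
  by rewrite -(hfi_ext i).2 //; have [] := sub t tab.
move=> _ _ v [a [Aa Pa] <-] [b [Ab Pb] <-] /andP [hv1 hv2].
have hv : Num.min (f a) (f b) <= v <= Num.max (f a) (f b).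
  by rewrite ge_min le_max hv1 hv2 orbT.
case: (leP a b) => ab.
  exact: (key a b v Aa Pa Ab Pb ab hv).
by apply: (key b a v Ab Pb Aa Pa (ltW ab)); rewrite minC maxC.
Qed.

Lemma atom_conv w : convexS (atom c N f w).
Proof.
elim/last_ind: w => [|w i IH].
  move=> y z v; rewrite /atom /= /Xspace /= !in_itv /= => /andP [y1 y2] /andP [z1 z2] /andP [yv vz].
  by rewrite (le_trans y1 yv) (le_trans vz z2).
rewrite atom_rcons; apply: conv_closure; exact: conv_img.
Qed.

Lemma atom_diam w y z : atom c N f w y -> atom c N f w z ->
  `|y - z| <= lam ^+ size w * (c N - c 0).
Proof.
elim/last_ind: w y z => [|w i IH] y z.
  rewrite /atom /= /Xspace /= !in_itv /= => /andP [y1 y2] /andP [z1 z2].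
  rewrite expr0 mul1r ler_norml; apply/andP; split; lra.
rewrite atom_rcons size_rcons exprS => cy cz.
apply/ler_addgt0Pr => e e0.
have e2 : 0 < e / 2 by rewrite divr_gt0.
have [_ [[a [Aa Pa] <-] hs]] := closure_eps cy e2.
have [_ [[b [Ab Pb] <-] hs']] := closure_eps cz e2.
have h := hcontr _ _ _ Pa Pb.
have h2 := ler_wpM2l (ltW lam0) (IH a b Aa Ab).
have tri := ler_distD (f a) y z.
have tri2 := ler_distD (f b) (f a) z.
rewrite (distrC (f b) z) in tri2.
lra.
Qed.



Lemma gap_pos : exists e : R, 0 < e /\ forall m, (m < N)%N -> e <= c m.+1 - c m.
Proof.
suff: forall K, (K <= N)%N -> exists e : R, 0 < e /\ forall m, (m < K)%N -> e <= c m.+1 - c m.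
  by apply.
elim => [|K IH] KN.
  by exists 1; split => // m; rewrite ltn0.
have [e [e0 he]] := IH (ltnW KN).
exists (Num.min e (c K.+1 - c K)); split.
  by rewrite lt_min e0 subr_gt0 hc.
move=> m; rewrite ltnS leq_eqVlt => /orP [/eqP ->|mK].
  by rewrite ge_min lexx orbT.
by rewrite ge_min he.
Qed.

Lemma lam_small : exists n1, forall n, (n1 <= n)%N -> forall m, (m < N)%N ->
  lam ^+ n * (c N - c 0) <= c m.+1 - c m.
Proof.
have [e [e0 he]] := gap_pos.
have D0 : 0 < c N - c 0.
  by rewrite subr_gt0; apply: c_lt => //; apply: leq_trans hN.
have eD : 0 < e / (c N - c 0) by rewrite divr_gt0.
have := @cvg_geometric R 1 lam.
rewrite ger0_norm ?ltW // => /(_ lam1).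
move=> /cvgr0_norm_lt /(_ _ eD).
case=> n0 _ H; exists n0 => n /H /= hn m mN.
rewrite /geometric mul1r ger0_norm ?exprn_ge0 ?ltW // in hn.
rewrite ltr_pdivlMr // in hn.
exact: le_trans (ltW hn) (he m mN).
Qed.

Variables (x : R) (theta : nat -> 'I_N).
Hypothesis hX : in_Xtilde c N f x.
Hypothesis hit : is_itinerary c N f x theta.

Lemma orbit_atom n t : atom c N f (wseq theta n t) (iter (t + n) f x).
Proof.
elim: n => [|n IH]; first by rewrite addn0; exact: (hX t).1.
rewrite /wseq mkseqS -/(wseq theta n t) atom_rcons addnS iterS.
apply: subset_closure; exists (iter (t + n) f x) => //; split => //; exact: hit.
Qed.

Lemma SsetP n (u : seq 'I_N) (i : 'I_N) : size u = n ->
  (i \in Sset theta n u) <->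
  exists t, atom c N f u (iter (t + n) f x) /\ piece c N i (iter (t + n) f x).
Proof.
move=> su; rewrite inE; split => [/asboolP [t [wt ti]]|[t [Au Pi]]].
  by exists t; split; [rewrite -wt; exact: orbit_atom|rewrite -ti; exact: hit].
apply/asboolP; exists t; split.
  case: (eqVneq (wseq theta n t) u) => // /eqP ne; exfalso.
  apply: (atom_disj _ _ _ ne _ (orbit_atom n t) Au).
  by rewrite size_mkseq su.
exact: (piece_uniq _ _ _ (hit (t + n)) Pi).
Qed.

Lemma between {n} {u : n.-tuple 'I_N} {j k : 'I_N} {t t'} :
  (j < k)%N ->
  atom c N f u (iter (t + n) f x) -> piece c N j (iter (t + n) f x) ->
  atom c N f u (iter (t' + n) f x) -> piece c N k (iter (t' + n) f x) ->
  atom c N f u (c k).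
Proof.
move=> jk Aj Pj Ak Pk.
have k0 : (0 < k)%N by apply: leq_ltn_trans (leq0n j) jk.
have h1 : iter (t + n) f x < c k.
  apply: (lt_le_trans (piece_right (leq_ltn_trans jk (ltn_ord k)) Pj)).
  exact: c_le jk (ltnW (ltn_ord k)).
have h2 : c k < iter (t' + n) f x := piece_left k0 Pk.
apply: (atom_conv u (iter (t + n) f x) (iter (t' + n) f x) (c k) Aj Ak).
by rewrite !ltW.
Qed.

Lemma upper_u n (u : n.-tuple 'I_N) : (#|Sset theta n u|.-1 <= #|K1 c N f u|)%N.
Proof.
apply: card_pred_le => j k jS kS jk.
have [t [Aj Pj]] := (SsetP _ _ _ (size_tuple u)).1 jS.
have [t' [Ak Pk]] := (SsetP _ _ _ (size_tuple u)).1 kS.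
have k0 : (0 < k)%N by apply: leq_ltn_trans (leq0n j) jk.
rewrite inE k0 /=; apply/asboolP; exact: between jk Aj Pj Ak Pk.
Qed.

Lemma atom_tuple_disj n (u v : n.-tuple 'I_N) y :
  atom c N f u y -> atom c N f v y -> u = v.
Proof.
move=> Au Av; case: (eqVneq u v) => // /eqP ne; exfalso.
apply: (atom_disj u v _ _ y Au Av); first by rewrite !size_tuple.
by move=> e; apply: ne; exact: val_inj.
Qed.

Lemma dd_upper n : (dd theta n <= N.-1)%N.
Proof.
have h1 : (dd theta n <= \sum_(u : n.-tuple 'I_N) #|K1 c N f u|)%N.
  by rewrite /dd; apply: leq_sum => u _; exact: upper_u.
have h2 : (\sum_(u : n.-tuple 'I_N) #|K1 c N f u| <= #|[set k : 'I_N | (0 < k)%N]%SET|)%N.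
  apply: sum_disj.
    by move=> u k; rewrite !inE => /andP [].
  move=> u v k; rewrite !inE => /andP [_ /asboolP Au] /andP [_ /asboolP Av].
  exact: atom_tuple_disj Au Av.
have h3 : (#|[set k : 'I_N | (0 < k)%N]%SET| <= N.-1)%N.
  by apply: card_pos_lt; [exact: leq_trans hN|move=> k; rewrite inE].
exact: leq_trans h1 (leq_trans h2 h3).
Qed.

Lemma lower_u n (u : n.-tuple 'I_N) : (#|Tset theta n u| <= #|Sset theta n u|.-1)%N.
Proof.
apply: card_pred_le2 => k; rewrite inE => /andP [kS /existsP [j /andP [jS /eqP jk]]].
by split => //; exists j => //; rewrite -jk.
Qed.

Lemma dd_lower n : (#|Dset c N f x n| <= dd theta n)%N.
Proof.
have cov : forall k, k \in Dset c N f x n -> exists u : n.-tuple 'I_N, k \in Tset theta n u.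
  move=> k; rewrite inE => /andP [k0 /asboolP [A [[[w [Aw _]] _] Ack [t [At Pt]] [t' [At' Pt']]]]].
  subst A; exists w; rewrite inE.
  have kS : k \in Sset theta n w.
    by apply/(SsetP _ _ _ (size_tuple w)); exists t'.
  pose j := Ordinal (leq_ltn_trans (leq_pred k) (ltn_ord k)).
  have jS : j \in Sset theta n w.
    by apply/(SsetP _ _ _ (size_tuple w)); exists t.
  rewrite kS /=; apply/existsP; exists j; rewrite jS /=.
  by rewrite prednK.
rewrite -sum1_card.
apply: (@leq_trans (\sum_(k in Dset c N f x n) \sum_(u : n.-tuple 'I_N) (k \in Tset theta n u : nat))).
  apply: leq_sum => k /cov [u ku]; rewrite (bigD1 u) //= ku.
  by [].
apply: (@leq_trans (\sum_k \sum_(u : n.-tuple 'I_N) (k \in Tset theta n u : nat))).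
  rewrite [X in (_ <= X)%N](bigID (fun k => k \in Dset c N f x n)) /=.
  exact: leq_addr.
rewrite exchange_big /=; apply: leq_sum => u _.
apply: (@leq_trans #|Tset theta n u|); last exact: lower_u.
rewrite -sum1_card [X in (_ <= X)%N]big_mkcond /=.
by apply: leq_sum => k _; case: (k \in Tset theta n u).
Qed.

Lemma inD n k : k \in Dset c N f x n -> lr_visited c N f x n k.
Proof. by rewrite inE => /andP [_ /asboolP]. Qed.

Lemma Dset_mono n : Dset c N f x n.+1 \subset Dset c N f x n.
Proof.
apply/fintype.subsetP => k; rewrite !inE => /andP [k0 /asboolP H].
rewrite k0 /=; apply/asboolP.
move: H => [A [[[w [Aw ne]] [t0 At0]] Ack [t [At Pt]] [t' [At' Pt']]]].
case: w Aw => [[|i s] //= sz] Aw.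
have sub : A `<=` atom c N f s by rewrite -Aw; exact: atom_cons.
exists (atom c N f s); split.
- split.
    exists (@Tuple n _ s sz); split => //.
    by exists (iter (t0 + n.+1) f x); exact: sub.
  by exists t0.+1; rewrite addSnnS; exact: sub.
- exact: sub.
- by exists t.+1; rewrite addSnnS; split => //; exact: sub.
- by exists t'.+1; rewrite addSnnS; split => //; exact: sub.
Qed.

Lemma E_u n : (forall m, (m < N)%N -> lam ^+ n * (c N - c 0) <= c m.+1 - c m) ->
  forall u : n.-tuple 'I_N, (#|Sset theta n u|.-1 <= #|K2 c N f x n u|)%N.
Proof.
move=> hsmall u; apply: card_pred_le => j k jS kS jk.
have [t [Aj Pj]] := (SsetP _ _ _ (size_tuple u)).1 jS.
have [t' [Ak Pk]] := (SsetP _ _ _ (size_tuple u)).1 kS.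
have k0 : (0 < k)%N by apply: leq_ltn_trans (leq0n j) jk.
have kj : val k = j.+1.
  apply/eqP; rewrite eqn_leq jk andbT leqNgt; apply/negP => lt.
  have h1 := piece_right (leq_ltn_trans jk (ltn_ord k)) Pj.
  have h2 := piece_left k0 Pk.
  have h3 := c_le lt (ltnW (ltn_ord k)).
  have h4 := hsmall j.+1 (ltnW (leq_ltn_trans lt (ltn_ord k))).
  have h5 := atom_diam _ _ _ Aj Ak; rewrite size_tuple in h5.
  move: h5; rewrite ler_norml => /andP [h5 h6]; lra.
have Ack := between jk Aj Pj Ak Pk.
rewrite inE; apply/andP; split; last by apply/asboolP.
rewrite inE k0 /=; apply/asboolP; exists (atom c N f u); split => //.
- split; last by exists t'.
  by exists u; split => //; exists (iter (t + n) f x).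
- by exists t; split => //; rewrite kj.
- by exists t'.
Qed.

Lemma dd_E n : (forall m, (m < N)%N -> lam ^+ n * (c N - c 0) <= c m.+1 - c m) ->
  (dd theta n <= #|Dset c N f x n|)%N.
Proof.
move=> hsmall.
rewrite /dd; apply: (@leq_trans (\sum_(u : n.-tuple 'I_N) #|K2 c N f x n u|)).
  by apply: leq_sum => u _; exact: E_u.
apply: sum_disj.
  by move=> u k; rewrite inE => /andP [].
move=> u v k; rewrite !inE => /andP [_ /asboolP Au] /andP [_ /asboolP Av].
exact: atom_tuple_disj Au Av.
Qed.

Lemma main : exists m0 : nat, (1 <= m0)%N /\
    exists beta : int,
      [/\ (forall n : nat, (m0 <= n)%N ->
             (complexity N theta n)%:Z = (n * card_Delta_lr c N f x)%:Z + beta),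
           (complexity N theta 1)%:Z - (card_Delta_lr c N f x)%:Z <= beta &
           beta <= (complexity N theta 1)%:Z - (N.-1)%:Z
                   + m0%:Z * ((N.-1)%:Z - (card_Delta_lr c N f x)%:Z)].
Proof.
have [n1 hn1] := lam_small.
have [n2 [n20 hn2]] := @stabilize _ (fun n => Dset c N f x n) Dset_mono.
have monoD : forall m n, (m <= n)%N -> Dset c N f x n \subset Dset c N f x m.
  move=> m n /subnK <-; elim: (n - m)%N => [|k IH]; first by rewrite add0n.
  rewrite addSn; exact: fintype.subset_trans (Dset_mono _) IH.
have eL : card_Delta_lr c N f x = #|Dset c N f x n2|.
  rewrite /card_Delta_lr; apply: eq_card => k.
  apply/idP/idP => [/set_mem /= /andP [k0 /asboolP H]|].
    by rewrite inE k0 /=; apply/asboolP; exact: H.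
  rewrite inE => /andP [k0 /asboolP H].
  apply: mem_set => /=; rewrite k0 /=; apply/asboolP => m m0.
  case: (leqP n2 m) => [le|lt].
    apply: inD; rewrite (hn2 m le) inE k0 /=; exact/asboolP.
  apply: inD; apply: (fintype.subsetP (monoD m n2 (ltnW lt))).
  by rewrite inE k0 /=; exact/asboolP.
set L := card_Delta_lr c N f x.
have hdL : forall n, (0 < n)%N -> (L <= dd theta n)%N.
  move=> n n0; apply: leq_trans (dd_lower n); rewrite /L eL.
  case: (leqP n2 n) => [le|lt]; first by rewrite (hn2 n le).
  apply: subset_leq_card; exact: monoD (ltnW lt).
have hdE : forall n, (maxn n1 n2 <= n)%N -> dd theta n = L.
  move=> n; rewrite geq_max => /andP [h1 h2].
  apply/eqP; rewrite eqn_leq (hdL n (leq_trans n20 h2)) andbT.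
  rewrite /L eL -(hn2 n h2); exact: dd_E (hn1 n h1).
set m0 := maxn n1 n2.
have m0pos : (0 < m0)%N by rewrite leq_max n20 orbT.
set P := complexity N theta.
have Psucc n : P n.+1 = (P n + dd theta n)%N := complexity_succ N theta n.
have Pm : forall k, P (k + m0)%N = (P m0 + k * L)%N.
  elim => [|k IH]; first by rewrite add0n mul0n addn0.
  rewrite addSn Psucc IH hdE ?leq_addl // mulSn; lia.
have Plow : forall k, (P 1 + k * L <= P k.+1)%N.
  elim => [|k IH]; first by rewrite mul0n addn0.
  rewrite [P k.+2]Psucc mulSn; have := hdL k.+1 erefl; lia.
have Pup : forall k, (P k.+1 <= P 1 + k * N.-1)%N.
  elim => [|k IH]; first by rewrite mul0n addn0.
  rewrite [P k.+2]Psucc mulSn; have := dd_upper k.+1; lia.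
exists m0; split => //.
exists ((P m0)%:Z - (m0 * L)%:Z); split.
- move=> n le; rewrite -(subnK le) Pm.
  set k := (n - m0)%N. lia.
- have := Plow m0.-1; rewrite prednK //. 
  have em : m0 = (m0.-1).+1 by rewrite prednK.
  move: (m0.-1) em => k ->. lia.
- have := Pup m0.-1; rewrite prednK //.
  have em : m0 = (m0.-1).+1 by rewrite prednK.
  move: (m0.-1) em => k ->. lia.
Qed.

End Geo.

Theorem theorem2 (R : realType) (N : nat) (c : nat -> R) (f : R -> R)
    (x : R) (theta : nat -> 'I_N) :
  (2 <= N)%N ->
  (forall k : nat, (k < N)%N -> c k < c k.+1) ->
  piecewise_contracting c N f ->
  separation c N f ->
  in_Xtilde c N f x ->
  is_itinerary c N f x theta ->
  exists m0 : nat, (1 <= m0)%N /\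
    exists beta : int,
      [/\ (forall n : nat, (m0 <= n)%N ->
             (complexity N theta n)%:Z = (n * card_Delta_lr c N f x)%:Z + beta),
           (complexity N theta 1)%:Z - (card_Delta_lr c N f x)%:Z <= beta &
           beta <= (complexity N theta 1)%:Z - (N.-1)%:Z
                   + m0%:Z * ((N.-1)%:Z - (card_Delta_lr c N f x)%:Z)].
Proof.
move=> hN hc [hXmap _ [lam [lam0 lam1 hcontr]]] [fi [hfi_ext hfi_inj hfi_disj]] hX hit.
by eapply main; eassumption.
Qed.
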